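(* Let $X$ be a Banach space over $\mathbb{K}\in\{\mathbb{R},\mathbb{C}\}$ and let $G_1, G_2 \in L(X)$ with $\|G_1\| = \|G_2\| = 1$. Suppose there exists a function $\phi : (0, 1] \to (0, 1]$ with $\phi(t) \to 1$ as $t \to 1$ such that for every $x \in S_X$ and $t\in(0,1]$, $\|G_1x\| \ge t$ implies $\|G_2x\| \ge \phi(t)$. Then $\|T\|_{G_1} \le \|T\|_{G_2}$ for every $T \in L(X)$.
   Context: $S_X$ is the unit sphere of $X$ and $L(X)$ the bounded linear operators on $X$. For a norm-one $G\in L(X)$, $\|T\|_G := \inf_{\delta>0}\sup\{\|Tx\|: x\in S_X,\ \|Gx\|>1-\delta\}$. *)

(* Defs.v *)
From HB Require Import structures.
From mathcomp Require Import all_boot all_order all_algebra.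
From mathcomp Require Import all_classical all_reals all_analysis.
Set Implicit Arguments. Unset Strict Implicit. Unset Printing Implicit Defensive.
Import Order.TTheory GRing.Theory Num.Theory.
Import numFieldNormedType.Exports.
Local Open Scope classical_set_scope.
Local Open Scope ring_scope.

Definition bounded_op (R : realType) (X : normedModType R) (T : X -> X) : Prop :=
  exists M : R, forall x : X, `|T x| <= M * `|x|.

Definition opnorm (R : realType) (X : normedModType R) (T : X -> X) : \bar R :=
  ereal_sup [set (`|T x|)%:E | x in [set x : X | `|x| <= 1]].

Definition Gnorm (R : realType) (X : normedModType R) (G T : X -> X) : \bar R :=
  ereal_inf [set ereal_sup [set (`|T x|)%:E |
                 x in [set x : X | `|x| = 1 /\ 1 - d < `|G x|]]
            | d in [set d : R | 0 < d]].

(* Main.v *)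
Require Import Defs.
From HB Require Import structures.
From mathcomp Require Import all_boot all_order all_algebra.
From mathcomp Require Import all_classical all_reals all_analysis.
Import Order.TTheory GRing.Theory Num.Theory.
Import numFieldNormedType.Exports.
Local Open Scope classical_set_scope.
Local Open Scope ring_scope.
Theorem theorem3p14 (R : realType) (X : completeNormedModType R)
    (G1 G2 : {linear X -> X}) (hG1b : bounded_op G1) (hG2b : bounded_op G2)
    (hG1 : opnorm G1 = 1%E) (hG2 : opnorm G2 = 1%E)
    (phi : R -> R)
    (hphi_range : forall t, 0 < t <= 1 -> 0 < phi t <= 1)
    (hphi_lim : phi t @[t --> (1 : R)^'-] --> (1 : R))
    (hphi : forall (x : X) (t : R), `|x| = 1 -> 0 < t <= 1 ->
              t <= `|G1 x| -> phi t <= `|G2 x|) :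
  forall T : {linear X -> X}, bounded_op T -> (Gnorm G1 T <= Gnorm G2 T)%E.

Proof.
move=> T _; apply: le_ereal_inf_tmp => _ [d d0 <-].
have h1 : 1 - d < 1 :> R by rewrite ltrBlDr ltrDl.
have H : \forall t \near (1:R)^'-, 1 - d < phi t.
  exact: (cvgr_gt 1 hphi_lim (1 - d) h1).
move: H; rewrite near_withinE => /nbhs_ballP [e /= e0 He].
pose d' := Num.min e 1.
have d'0 : 0 < d' by rewrite lt_min e0 ltr01.
apply: ereal_inf_le; exists (ereal_sup [set (`|T x|)%:E |
                 x in [set x : X | `|x| = 1 /\ 1 - d' < `|G1 x|]]).
  by exists d'.
apply: le_ereal_sup => _ [x [x1 hx] <-]; exists x => //; split => //.
pose m := Num.min `|G1 x| 1.
pose t := (1 - d' + m) / 2.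
have hm : 1 - d' < m by rewrite lt_min hx ltrBlDr ltrDl d'0.
have tlo : 1 - d' < t by rewrite /t ltr_pdivlMr // mulr2n mulrDr mulr1 ltrD2l.
have thi : t < m by rewrite /t ltr_pdivrMr // mulrDr mulr1 ltrD2r.
have tm1 : t < 1 by apply: lt_le_trans thi _; rewrite ge_min lexx orbT.
have tG : t <= `|G1 x| by apply/ltW/(lt_le_trans thi); rewrite ge_min lexx.
have d'1 : d' <= 1 by rewrite ge_min lexx orbT.
have d'e : d' <= e by rewrite ge_min lexx.
have t0 : 0 < t by apply: le_lt_trans tlo; rewrite subr_ge0.
have hb : ball (1:R) e t.
  rewrite /ball /= ger0_norm ?subr_ge0 ?ltW //.
  by apply: (lt_le_trans _ d'e); rewrite ltrBlDr addrC -ltrBlDr.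
have lt1 := He t hb tm1.
apply: (lt_le_trans lt1); apply: hphi => //.
by rewrite t0 ltW.
Qed.
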